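(* Let $[Q,P]$ be a dynamical structure function ($Q$ $p\times p$, $P$ $p\times m$, strictly proper) and assume $[I-Q,\ P]$ has only simple poles and has no common poles and zeros. Write its Gilbert realisation $[I-Q,\ P]=\sum_{i=1}^l \frac{K_i}{s-\lambda_i}+[I,\ 0]$ with $K_i=\lim_{s\to\lambda_i}(s-\lambda_i)[I-Q,\ P]$ of rank one, decomposed as $K_i=E_iF_i$ with $E_i\in\mathbb{C}^p$ and $F_i=(E_i^TE_i)^{-1}E_i^TK_i$. Let $N(s)=C_2(A_2-sI)^{-1}B_2+I$ be a diagonal $p\times p$ transfer matrix with minimal realisation $(A_2,B_2,C_2,I)$. If a pole $\lambda_i$ of $[I-Q,\ P]$ is cancelled by cascading $N(s)$ (forming $N(s)[I-Q,\ P]$), then $N(\lambda_i)E_i=0$. *)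

(* Defs.v *)
From HB Require Import structures.
From mathcomp Require Import all_boot all_order all_algebra.
From mathcomp Require Import all_classical all_reals all_analysis.
From mathcomp Require Export complex.
Export Order.TTheory GRing.Theory Num.Theory.
Export numFieldTopology.Exports numFieldNormedType.Exports.

Set Implicit Arguments.
Unset Strict Implicit.
Unset Printing Implicit Defensive.

Local Open Scope ring_scope.
Local Open Scope classical_set_scope.

(* The complex numbers C = R[i], packaged as a numClosedFieldType so that the
   standard metric topology of MathComp-Analysis applies. *)
Definition Cx (R : realType) : numClosedFieldType := R[i].

Section TransferMatrices.
Variable R : realType.
Local Notation C := (Cx R).

Definition is_eig n (A : 'M[C]_n) (s : C) : bool := \det (s%:M - A) == 0.

Definition ss_tf n p q (A : 'M[C]_n) (B : 'M[C]_(n, q)) (Cm : 'M[C]_(p, n))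
  (D : 'M[C]_(p, q)) (s : C) : 'M[C]_(p, q) :=
  Cm *m invmx (s%:M - A) *m B + D.

Definition realizes p q (G : C -> 'M[C]_(p, q)) n (A : 'M[C]_n)
  (B : 'M[C]_(n, q)) (Cm : 'M[C]_(p, n)) (D : 'M[C]_(p, q)) : Prop :=
  forall s, ~~ is_eig A s -> G s = ss_tf A B Cm D s.

(* Kalman rank conditions: rank [B, AB, ..., A^(n-1)B] = n, etc. *)
Definition controllable n q (A : 'M[C]_n) (B : 'M[C]_(n, q)) : bool :=
  row_full (\sum_(k < n) <<(A ^+ k *m B)^T>>)%MS.

Definition observable n p (A : 'M[C]_n) (Cm : 'M[C]_(p, n)) : bool :=
  controllable A^T Cm^T.

Definition minimal_real n p q (A : 'M[C]_n) (B : 'M[C]_(n, q))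
  (Cm : 'M[C]_(p, n)) : bool := controllable A B && observable A Cm.

Definition strictly_proper p q (G : C -> 'M[C]_(p, q)) : Prop :=
  exists n (A : 'M[C]_n) (B : 'M[C]_(n, q)) (Cm : 'M[C]_(p, n)),
    realizes G A B Cm 0.

Definition is_pole p q (G : C -> 'M[C]_(p, q)) (a : C) : Prop :=
  ~ cvg (G s @[s --> a^']).

Definition only_simple_poles p q (G : C -> 'M[C]_(p, q)) : Prop :=
  forall a, is_pole G a -> cvg ((s - a) *: G s @[s --> a^']).

Definition rosenbrock n p q (A : 'M[C]_n) (B : 'M[C]_(n, q))
  (Cm : 'M[C]_(p, n)) (D : 'M[C]_(p, q)) (z : C) : 'M[C]_(n + p, n + q) :=
  block_mx (A - z%:M) B Cm D.

(* z is a (transmission) zero of G: for a minimal realisation of G, the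
   Rosenbrock matrix drops rank at z below its normal rank *)
Definition is_zero p q (G : C -> 'M[C]_(p, q)) (z : C) : Prop :=
  exists n (A : 'M[C]_n) (B : 'M[C]_(n, q)) (Cm : 'M[C]_(p, n))
    (D : 'M[C]_(p, q)),
    [/\ minimal_real A B Cm, realizes G A B Cm D &
        exists s, \rank (rosenbrock A B Cm D z) < \rank (rosenbrock A B Cm D s)]%N.

Definition no_common_poles_zeros p q (G : C -> 'M[C]_(p, q)) : Prop :=
  forall z, is_pole G z -> ~ is_zero G z.

Definition dsf_mx p m (Q : C -> 'M[C]_p) (P : C -> 'M[C]_(p, m)) (s : C)
  : 'M[C]_(p, p + m) := row_mx (1 - Q s) (P s).

Definition gilbertF p q (E : 'cV[C]_p) (K : 'M[C]_(p, q)) : 'rV[C]_q :=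
  invmx (E^T *m E) *m E^T *m K.

Definition Ntf n p (A2 : 'M[C]_n) (B2 : 'M[C]_(n, p)) (C2 : 'M[C]_(p, n))
  (s : C) : 'M[C]_p :=
  C2 *m invmx (A2 - s%:M) *m B2 + 1.

End TransferMatrices.

(* Main.v *)
Require Import Defs.
From HB Require Import structures.
From mathcomp Require Import all_boot all_order all_algebra.
From mathcomp Require Import all_classical all_reals all_analysis.
Import Order.TTheory GRing.Theory Num.Theory.
Import numFieldTopology.Exports numFieldNormedType.Exports.
Local Open Scope ring_scope.
Local Open Scope classical_set_scope.

Section Helpers.
Context {K : numFieldType} {T : Type} {F : set_system T} {FF : Filter F}.

Lemma mx_entry_cvg m n (f : T -> 'M[K]_(m,n)) (L : 'M[K]_(m,n)) i j :
  f x @[x --> F] --> L -> f x i j @[x --> F] --> L i j.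
Proof.
move=> fL.
have hc : (fun M : 'M[K]_(m,n) => M i j) x @[x --> L] --> L i j.
  move=> A /nbhs_ballP[e e0 eA]; apply/nbhs_ballP; exists e => // N [_ h].
  exact: eA (h i j).
exact: (cvg_comp _ _ fL hc).
Qed.

Lemma cvg_sumK (I : Type) (r : seq I) (P : pred I) (f : I -> T -> K) (l : I -> K) :
  (forall i, P i -> f i x @[x --> F] --> l i) ->
  \sum_(i <- r | P i) f i x @[x --> F] --> \sum_(i <- r | P i) l i.
Proof. by move=> h; apply: (@cvg_big _ _ +%R 0 P add_continuous). Qed.

Lemma cvg_prodK (I : Type) (r : seq I) (P : pred I) (f : I -> T -> K) (l : I -> K) :
  (forall i, P i -> f i x @[x --> F] --> l i) ->
  \prod_(i <- r | P i) f i x @[x --> F] --> \prod_(i <- r | P i) l i.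
Proof.
move=> h; elim: r => [|a r IH].
  rewrite big_nil; under eq_cvg do rewrite big_nil; exact: cvg_cst.
rewrite big_cons; under eq_cvg do rewrite big_cons.
case: ifP => Pa //.
exact: (cvgM (h a Pa) IH).
Qed.

Lemma cvg_det n (M : T -> 'M[K]_n) (L : 'M[K]_n) :
  (forall i j, M x i j @[x --> F] --> L i j) -> \det (M x) @[x --> F] --> \det L.
Proof.
move=> h; apply: cvg_sumK => s _.
apply: cvgMl_tmp; apply: cvg_prodK => i _; exact: h.
Qed.

Lemma cvg_adj n (M : T -> 'M[K]_n) (L : 'M[K]_n) :
  (forall i j, M x i j @[x --> F] --> L i j) ->
  forall i j, \adj (M x) i j @[x --> F] --> \adj L i j.
Proof.
move=> h i j; rewrite [X in _ --> X]mxE /cofactor.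
under eq_cvg do rewrite mxE /cofactor.
apply: cvgMl_tmp; apply: cvg_det => a b.
rewrite !mxE; under eq_cvg do rewrite !mxE; exact: h.
Qed.

Lemma cvg_invmx n (M : T -> 'M[K]_n) (L : 'M[K]_n) : L \in unitmx ->
  (forall i j, M x i j @[x --> F] --> L i j) ->
  forall i j, invmx (M x) i j @[x --> F] --> invmx L i j.
Proof.
move=> uL h i j.
have hd := @cvg_det n M L h.
have hd0 : \det L != 0 by rewrite -unitfE -unitmxE.
have ev := cvgr_neq0 _ hd hd0.
have e : {near F, (fun x => (\det (M x))^-1 * \adj (M x) i j) =1 (fun x => invmx (M x) i j)}.
  near=> x; rewrite /invmx unitmxE unitfE.
  have -> : \det (M x) != 0 by near: x; exact: ev.
  by rewrite !mxE.
apply: cvg_trans (near_eq_cvg e) _.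
rewrite /invmx uL [(_ *: \adj L) i j]mxE.
apply: cvgM; first exact: cvgV.
exact: cvg_adj.
Unshelve. all: by end_near. Qed.
End Helpers.

Theorem theorem2 (R : realType) (p m l : nat)
  (Q : Cx R -> 'M[Cx R]_p) (P : Cx R -> 'M[Cx R]_(p, m))
  (lam : 'I_l -> Cx R) (K : 'I_l -> 'M[Cx R]_(p, p + m))
  (E : 'I_l -> 'cV[Cx R]_p)
  (n2 : nat) (A2 : 'M[Cx R]_n2) (B2 : 'M[Cx R]_(n2, p))
  (C2 : 'M[Cx R]_(p, n2)) (i : 'I_l) :
  (* [Q, P] strictly proper; [I - Q, P] has only simple poles and no common
     poles and zeros *)
  strictly_proper Q -> strictly_proper P ->
  only_simple_poles (dsf_mx Q P) ->
  no_common_poles_zeros (dsf_mx Q P) ->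
  (* Gilbert realisation: the lam j are the distinct poles, K j the residues *)
  injective lam ->
  (forall a, is_pole (dsf_mx Q P) a <-> exists j, a = lam j) ->
  (forall j, (s - lam j) *: dsf_mx Q P s @[s --> (lam j)^'] --> K j) ->
  (forall s, (forall j, s != lam j) ->
     dsf_mx Q P s = \sum_(j < l) (s - lam j)^-1 *: K j + row_mx 1 0) ->
  (forall j, \rank (K j) = 1%N) ->
  (* K j = E j F j with F j = (E j^T E j)^-1 E j^T K j *)
  (forall j, ((E j)^T *m E j \in unitmx) /\ K j = E j *m gilbertF (E j) (K j)) ->
  (* N(s) = C2 (A2 - sI)^-1 B2 + I diagonal, with (A2, B2, C2, I) minimal *)
  minimal_real A2 B2 C2 ->
  (forall s, ~~ is_eig A2 s -> is_diag_mx (Ntf A2 B2 C2 s)) ->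
  (* N(lam i) is defined, i.e. lam i is not a pole of N *)
  ~~ is_eig A2 (lam i) ->
  (* the pole lam i is cancelled in the cascade N(s) [I - Q, P] *)
  ~ is_pole (fun s => Ntf A2 B2 C2 s *m dsf_mx Q P s) (lam i) ->
  Ntf A2 B2 C2 (lam i) *m E i = 0.
Proof.
move=> _ _ _ _ _ _ hK _ hrk hE _ _ hnoeig hnp.
have hunit : A2 - (lam i)%:M \in unitmx.
  rewrite unitmxE unitfE; move: hnoeig; rewrite /is_eig.
  have -> : A2 - (lam i)%:M = (-1) *: ((lam i)%:M - A2) by rewrite scaleN1r opprB.
  by rewrite detZ mulf_eq0 negb_or expf_eq0 oppr_eq0 oner_eq0 andbF.
have hid : s @[s --> (lam i)^'] --> lam i.
  exact: cvg_within_filter cvg_id.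
have hA : forall a b, (A2 - s%:M) a b @[s --> (lam i)^'] --> (A2 - (lam i)%:M) a b.
  move=> a b.
  have eqA : forall s, (A2 - s%:M) a b = A2 a b - s *+ (a == b) by move=> s; rewrite !mxE.
  rewrite eqA; under eq_cvg do rewrite eqA.
  apply: cvgB; first exact: cvg_cst.
  exact: cvgMn.
have hinv := cvg_invmx _ _ _ hunit hA.
have hN : forall a b, Ntf A2 B2 C2 s a b @[s --> (lam i)^'] --> Ntf A2 B2 C2 (lam i) a b.
  move=> a b.
  have eq : forall s, Ntf A2 B2 C2 s a b =
     \sum_k (\sum_c C2 a c * invmx (A2 - s%:M) c k) * B2 k b + (1 : 'M[Cx R]_p) a b.
    move=> s; rewrite /Ntf [LHS]mxE [X in X + _]mxE; congr (_ + _).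
    by apply: eq_bigr => k _; rewrite mxE.
  under eq_cvg do rewrite eq; rewrite eq.
  apply: cvgD; last exact: cvg_cst.
  apply: cvg_sumK => k _; apply: cvgMr_tmp.
  apply: cvg_sumK => c _; apply: cvgMl_tmp; exact: hinv.
have /cvg_ex[L hL] := contrapT hnp.
have hK' := hK i.
set Fi := gilbertF (E i) (K i).
have key : forall a b, (Ntf A2 B2 C2 (lam i) *m K i) a b = 0.
  move=> a b.
  have h1 : (Ntf A2 B2 C2 s *m ((s - lam i) *: dsf_mx Q P s)) a b @[s --> (lam i)^']
      --> (Ntf A2 B2 C2 (lam i) *m K i) a b.
    rewrite [(_ *m K i) a b]mxE; under eq_cvg do rewrite mxE.
    apply: cvg_sumK => k _; apply: cvgM; first exact: hN.
    exact: mx_entry_cvg hK'.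
  have h2 : (Ntf A2 B2 C2 s *m ((s - lam i) *: dsf_mx Q P s)) a b @[s --> (lam i)^']
      --> (lam i - lam i) * L a b.
    have eq2 : forall s, (Ntf A2 B2 C2 s *m ((s - lam i) *: dsf_mx Q P s)) a b =
        (s - lam i) * (Ntf A2 B2 C2 s *m dsf_mx Q P s) a b.
      by move=> s; rewrite -scalemxAr mxE.
    under eq_cvg do rewrite eq2.
    apply: cvgM; last exact: mx_entry_cvg hL.
    apply: cvgB; [exact: hid | exact: cvg_cst].
  have hu := cvg_unique (@norm_hausdorff _ (Cx R)^o) h1 h2. rewrite hu. rewrite (_ : lam i - lam i = 0) ?mul0r //. exact: subrr.
have key2 : Ntf A2 B2 C2 (lam i) *m E i *m Fi = 0.
  have hK2 := (hE i).2.
  rewrite -mulmxA -hK2; apply/matrixP => a b; rewrite key mxE //.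
have Fi0 : exists b, Fi 0 b != 0.
  case/boolP: [exists b, Fi 0 b != 0] => [/existsP//|/existsPn hall].
  have F0 : Fi = 0.
    apply/matrixP => a b; rewrite (ord1 a) [RHS]mxE.
    by have := hall b; rewrite negbK => /eqP.
  have hK2 := (hE i).2.
  have := hrk i; rewrite hK2 -/Fi F0 mulmx0 mxrank0 => //.
have [b hb] := Fi0.
apply/matrixP => a z; rewrite (ord1 z) [RHS]mxE.
have := congr1 (fun M : 'M[Cx R]_(p, p + m) => M a b) key2.
rewrite /= [LHS]mxE big_ord1 [RHS]mxE.
by move/eqP; rewrite mulf_eq0 (negPf hb) orbF => /eqP.
Qed.
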